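(* Let $k=\mathbb R$ or $\mathbb C$, let $(E,g)$ be a finite-dimensional inner product vector space over $k$, let $f\in\operatorname{End}_k(E)$, let $H_1,\dots,H_n$ be $f$-invariant subspaces with $E=H_1\oplus\dots\oplus H_n$, and write $f_i=f|_{H_i}$. Let $\mathcal H_f^\perp=[\operatorname{Im} f_1]_1^\perp\oplus\dots\oplus[\operatorname{Im} f_n]_n^\perp$. Then $\mathcal H_f^\perp=[\operatorname{Im} f]^\perp$ if and only if $[\operatorname{Im} f_i]_i^\perp\subseteq\big[\sum_{j\ne i}\operatorname{Im} f_j\big]^\perp$ for every $i\in\{1,\dots,n\}$.
   Context: An inner product is linear in the first argument, conjugate-symmetric and positive definite. For a subspace $U\subseteq E$, $U^\perp=\{e\in E:g(u,e)=0\ \forall u\in U\}$; for a subspace $W\subseteq H_i$, $[W]_i^\perp=\{v\in H_i:g(w,v)=0\ \forall w\in W\}$. *)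

(* Defs.v *)
(* k = R (Stdlib reals, a rcfType via Rstruct) or C = R[i]
   (mathcomp-real-closed complex numbers). *)
From HB Require Import structures.
From mathcomp Require Import all_boot all_order all_algebra complex.
From mathcomp Require Import Rstruct.
Set Implicit Arguments. Unset Strict Implicit. Unset Printing Implicit Defensive.
Import Order.TTheory GRing.Theory Num.Theory.
Local Open Scope ring_scope.

Section InnerProduct.
Variables (K : numFieldType) (conj : K -> K) (E : vectType K).

Definition inner_product (g : E -> E -> K) : Prop :=
  [/\ forall (a : K) (u v w : E), g (a *: u + v) w = a * g u w + g v w,
      forall u v : E, g u v = conj (g v u) &
      forall u : E, u != 0 -> 0 < g u u].

Definition orth (g : E -> E -> K) (U : {vspace E}) (e : E) : Prop :=
  forall u, u \in U -> g u e = 0.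

Definition rel_orth (g : E -> E -> K) (Hi W : {vspace E}) (v : E) : Prop :=
  v \in Hi /\ orth g W v.

Definition Hf_perp (g : E -> E -> K) (f : 'End(E)) (n : nat)
  (H : 'I_n -> {vspace E}) (x : E) : Prop :=
  exists v : 'I_n -> E,
    (forall i, rel_orth g (H i) (f @: H i)%VS (v i)) /\ x = \sum_(i < n) v i.

End InnerProduct.

Definition lemma3p7_for (K : numFieldType) (conj : K -> K) : Prop :=
  forall (E : vectType K) (g : E -> E -> K) (f : 'End(E)) (n : nat)
         (H : 'I_n -> {vspace E}),
    inner_product conj g ->
    (forall i, (f @: H i <= H i)%VS) ->
    (\sum_(i < n) H i)%VS = fullv ->
    directv (\sum_(i < n) H i) ->
    ((forall x, Hf_perp g f H x <-> orth g (limg f) x) <->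
     (forall i (v : E), rel_orth g (H i) (f @: H i)%VS v ->
        orth g (\sum_(j < n | j != i) (f @: H j))%VS v)).

(* Main.v *)
Require Import Defs.
From HB Require Import structures.
From mathcomp Require Import all_boot all_order all_algebra complex.
From mathcomp Require Import Rstruct zify.
Set Implicit Arguments. Unset Strict Implicit.
Import Order.TTheory GRing.Theory Num.Theory.
Local Open Scope ring_scope.

Section Gen.
Variables (K : numFieldType) (conj : K -> K) (E : vectType K) (g : E -> E -> K).
Hypothesis c0 : conj 0 = 0.
Hypothesis gip : inner_product conj g.

Lemma gD u v w : g (u + v) w = g u w + g v w.
Proof. by move: gip; rewrite /inner_product => -[h _ _]; rewrite -[u]scale1r h mul1r scale1r. Qed.
Lemma g0l w : g 0 w = 0.
Proof. have h := gD 0 0 w; rewrite addr0 in h. by rewrite -(subrr (g 0 w)) {2}h addrK. Qed.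
Lemma gZ a u w : g (a *: u) w = a * g u w.
Proof. by move: gip; rewrite /inner_product => -[h _ _]; rewrite -[a *: u]addr0 h g0l addr0. Qed.
Lemma gN u w : g (- u) w = - g u w.
Proof. by rewrite -scaleN1r gZ mulN1r. Qed.
Lemma gB u v w : g (u - v) w = g u w - g v w.
Proof. by rewrite gD gN. Qed.
Lemma g_sum (I : Type) (r : seq I) (P : pred I) (F : I -> E) w :
  g (\sum_(i <- r | P i) F i) w = \sum_(i <- r | P i) g (F i) w.
Proof.
by elim/big_rec2: _ => [|i y1 y2 _ <-]; rewrite ?g0l // gD.
Qed.
Lemma gsym0 u v : g u v = 0 -> g v u = 0.
Proof. move: gip; rewrite /inner_product => -[_ h _] e; by rewrite h e c0. Qed.
Lemma g0r w : g w 0 = 0.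
Proof. by apply: gsym0; apply: g0l. Qed.
Lemma gpos0 u : g u u = 0 -> u = 0.
Proof.
move: gip; rewrite /inner_product => -[_ _ h] e; apply/eqP; apply/negP => nz.
by have := h u (introN idP nz); rewrite e ltxx.
Qed.

Lemma orth_sum (I : finType) (P : pred I) (Us : I -> {vspace E}) w :
  (forall i, P i -> orth g (Us i) w) -> orth g (\sum_(i | P i) Us i)%VS w.
Proof.
move=> h u /memv_sumP [us uU ->]; rewrite g_sum big1 // => i Pi.
exact: h (uU i Pi).
Qed.

Section Psi.
Variables (m : nat) (e : 'I_m -> E).
Definition psi (x : E) : 'rV[K]_m := \row_k g x (e k).
Lemma psi_lin : linear psi.
Proof.
move=> a u v; apply/rowP => k; rewrite !mxE /=.
by rewrite gD gZ.
Qed.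
HB.instance Definition _ := GRing.isLinear.Build K E 'rV[K]_m *:%R psi psi_lin.
End Psi.

Lemma orth_decomp (U V : {vspace E}) v : (U <= V)%VS -> v \in V ->
  exists2 a, a \in U & exists2 b, (b \in V /\ orth g U b) & v = a + b.
Proof.
move=> sUV vV.
pose e (k : 'I_(\dim U)) := (vbasis U)`_k.
pose ps := linfun (@psi _ e).
have orthP b : b \in lker ps -> orth g U b.
  rewrite memv_ker lfunE => /eqP /rowP psi0 u /coord_vbasis ->.
  rewrite g_sum big1 // => k _; rewrite gZ; apply/eqP; rewrite mulf_eq0; apply/orP; right.
  by apply/eqP; apply: gsym0; have := psi0 k; rewrite !mxE.
set W := (V :&: lker ps)%VS.
have UW0 : (U :&: W = 0)%VS.
  apply/eqP; rewrite -subv0; apply/subvP => u /memv_capP [uU /memv_capP [_ uk]].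
  by rewrite memv0; apply/eqP; apply: gpos0; apply: orthP.
have eqV : (U + W)%VS = V.
  apply/eqP; rewrite eqEdim subv_add sUV capvSl /= dimv_disjoint_sum //.
  have := limg_ker_dim ps V; rewrite -/W => <-.
  have : (\dim (ps @: V) <= \dim U)%N.
    apply: leq_trans (dimvS (subvf _)) _; rewrite dimvf /dim /= mul1n //.
  lia.
have /memv_addP [a aU [b bW ->]] : v \in (U + W)%VS by rewrite eqV.
exists a => //; exists b => //.
move/memv_capP: bW => [bV bk]; split => //. exact: (orthP b bk).
Qed.
End Gen.

Lemma main (K : numFieldType) (conj : K -> K) : conj 0 = 0 -> lemma3p7_for conj.
Proof.
move=> c0 E g f n H gip fH Hsum Hdir.
have limgE : limg f = (\sum_(i < n) f @: H i)%VS by rewrite -limg_sum Hsum.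
have limg_split i : limg f = (f @: H i + \sum_(j < n | j != i) f @: H j)%VS.
  by rewrite limgE (bigD1 i).
have orth_limg i w : orth g (f @: H i)%VS w ->
    orth g (\sum_(j < n | j != i) f @: H j)%VS w -> orth g (limg f) w.
  move=> h1 h2 u; rewrite (limg_split i) => /memv_addP [a aI [b bJ ->]].
  by rewrite (gD gip) h1 // h2 // addr0.
split.
- move=> eqv i v [vH vo].
  have : Hf_perp g f H v.
    exists (fun j => if j == i then v else 0); split.
      move=> j; case: eqP => [->//|_]; split; first exact: mem0v.
      by move=> u _; apply: (g0r c0 gip).
    by rewrite (bigD1 i) //= eqxx big1 ?addr0 // => j /negbTE ->.
  move/eqv => ov u uS; apply: ov; rewrite limgE.
  move: u uS; apply/subvP; apply/subv_sumP => j _; exact: (sumv_sup j).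
- move=> cond x; split.
  + case=> v [rv ->] u uI; apply: (gsym0 c0 gip).
    rewrite (g_sum gip) big1 // => i _; apply: (gsym0 c0 gip).
    case: (rv i) => vi vo; exact: (orth_limg i _ vo (cond i _ (rv i))).
  + move=> xo.
    have : x \in (\sum_(i < n) H i)%VS by rewrite Hsum memvf.
    case/memv_sumP => xs xsH xE.
    have : forall i, exists ab : E * E, [/\ ab.1 \in (f @: H i)%VS, ab.2 \in H i,
        orth g (f @: H i)%VS ab.2 & xs i = ab.1 + ab.2].
      move=> i; have [a aI [b [bH bo] e]] := orth_decomp c0 gip (fH i) (xsH i isT).
      by exists (a, b).
    case/fin_all_exists => ab abP.
    exists (fun i => (ab i).2); split.
      by move=> i; case: (abP i).
    set y := \sum_(i < n) (ab i).1.
    have xy : x = y + \sum_i (ab i).2.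
      by rewrite xE /y -big_split; apply: eq_bigr => i _; case: (abP i).
    have bo i : orth g (limg f) (ab i).2.
      case: (abP i) => _ bH bo _; have ro : rel_orth g (H i) (f @: H i)%VS (ab i).2 by split.
      exact: (orth_limg i _ bo (cond i _ ro)).
    have yI : y \in limg f by rewrite limgE; apply: memv_sumr => i _; case: (abP i).
    have y0 : y = 0.
      apply: (gpos0 gip).
      rewrite {1}(_ : y = x - \sum_i (ab i).2); last by rewrite xy addrK.
      rewrite (gB gip) (g_sum gip) big1 ?subr0.
        exact: (gsym0 c0 gip (xo y yI)).
      by move=> i _; exact: (gsym0 c0 gip (bo i y yI)).
    by rewrite xy y0 add0r.
Qed.

Theorem lemma3p7 :
  lemma3p7_for (K := Rdefinitions.R) id /\
  lemma3p7_for (K := (Rdefinitions.R)[i]) Num.conj.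
Proof.
split; apply: main => //; exact: rmorph0.
Qed.
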